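(* In the two-type setting described in the context: (1) if $x_1>1$ and $x_2>1$, then diffusion occurs from a small seed for every $\pi\in(0,1)$; (2) if $x_1\le1$ and $x_2\le1$, then diffusion does not occur from a small seed for any $\pi\in(0,1)$; (3) if exactly one of $x_1,x_2$ exceeds $1$, then there exists $\pi^*\in(0,1)$ such that diffusion occurs from a small seed for every $\pi\in(\pi^*,1)$.
   Context: There are two types $i\in\{1,2\}$, with meeting matrix $\Pi=\begin{pmatrix}\pi&1-\pi\\1-\pi&\pi\end{pmatrix}$, $0<\pi<1$. For each type $i$: $P_i$ is a degree distribution on the nonnegative integers; $w_i(d)>0$ are degree weights; $f_i(d,a)$, $g_i(d,a)$ ($0\le a\le d$) are adoption and abandonment rates satisfying: $f_i(d,0)=0$; $f_i(d,a)$ nondecreasing in $a$; $f_i(d,1)>0$ for some $d$ with $P_i(d)>0$; $g_i(d,0)>0$; $g_i(d,a)$ nonincreasing in $a$. Let $x_i=\sum_dP_i(d)w_i(d)\,d\,\frac{f_i(d,1)}{g_i(d,0)}$ (assumed finite; it is positive) and $A=\begin{pmatrix}\pi x_1&(1-\pi)x_2\\(1-\pi)x_1&\pi x_2\end{pmatrix}$. Diffusion occurs from a small seed means: for every $\varepsilon>0$ there exists $v\in\mathbb{R}^2$ with $0<v_i<\varepsilon$ and $(Av)_i>v_i$ for $i=1,2$. Diffusion within type $i$ when isolated corresponds to $x_i>1$. *)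

(* Defs.v *)
From Stdlib Require Import Reals Lra.
From Coquelicot Require Import Coquelicot.
Open Scope R_scope.

(** Data attached to one type i: degree distribution P, degree weights w,
    adoption rates f(d,a) and abandonment rates g(d,a) (0 <= a <= d). *)
Record type_data := TypeData {
  P : nat -> R;
  w : nat -> R;
  f : nat -> nat -> R;
  g : nat -> nat -> R
}.

Definition x_term (T : type_data) (d : nat) : R :=
  P T d * w T d * INR d * (f T d 1 / g T d 0).

Definition x_val (T : type_data) : R := Series (x_term T).

Definition valid_type (T : type_data) : Prop :=
  (forall d, 0 <= P T d) /\ is_series (P T) 1 /\
  (forall d, 0 < w T d) /\
  (forall d, f T d 0 = 0) /\
  (forall d a b, (a <= b)%nat -> (b <= d)%nat -> f T d a <= f T d b) /\
  (exists d, (1 <= d)%nat /\ 0 < P T d /\ 0 < f T d 1) /\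
  (forall d, 0 < g T d 0) /\
  (forall d a b, (a <= b)%nat -> (b <= d)%nat -> g T d b <= g T d a) /\
  ex_series (x_term T).

Definition A_apply1 (pi x1 x2 v1 v2 : R) : R := pi * x1 * v1 + (1 - pi) * x2 * v2.
Definition A_apply2 (pi x1 x2 v1 v2 : R) : R := (1 - pi) * x1 * v1 + pi * x2 * v2.

Definition diffusion_small_seed (pi x1 x2 : R) : Prop :=
  forall eps, 0 < eps ->
    exists v1 v2, 0 < v1 < eps /\ 0 < v2 < eps /\
      A_apply1 pi x1 x2 v1 v2 > v1 /\ A_apply2 pi x1 x2 v1 v2 > v2.

(* Main.v *)
Require Import Defs.
From Stdlib Require Import Reals Lra.
From Coquelicot Require Import Coquelicot.
Open Scope R_scope.

Lemma key (x1 x2 pi eps : R) : x1 > 1 -> (1 + /x1)/2 < pi < 1 -> 0 < eps ->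
  exists v1 v2, 0 < v1 < eps /\ 0 < v2 < eps /\
      A_apply1 pi x1 x2 v1 v2 > v1 /\ A_apply2 pi x1 x2 v1 v2 > v2.
Proof.
  intros H1 [Hp Hp1] He.
  assert (Hx : 0 < /x1) by (apply Rinv_0_lt_compat; lra).
  assert (Hxx : x1 * /x1 = 1) by (field; lra).
  assert (Hc : 0 < pi * x1 - 1).
  { assert (pi * x1 > /x1 * x1) by (apply Rmult_lt_compat_r; lra). lra. }
  set (c := pi * x1 - 1) in *.
  set (a := (1 - pi) * x1).
  assert (Ha : 0 < a) by (unfold a; nra).
  set (M := 1 + Rabs x2).
  assert (HM : 1 <= M) by (unfold M; pose proof (Rabs_pos x2); lra).
  set (m := Rmin (Rmin c a) 1).
  assert (Hm0 : 0 < m) by (unfold m; repeat apply Rmin_glb_lt; lra).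
  assert (Hmc : m <= c) by (unfold m; eapply Rle_trans; [apply Rmin_l|apply Rmin_l]).
  assert (Hma : m <= a) by (unfold m; eapply Rle_trans; [apply Rmin_l|apply Rmin_r]).
  assert (Hm1 : m <= 1) by (unfold m; apply Rmin_r).
  set (t := m / (2 * M)).
  assert (HtM : t * M = m / 2) by (unfold t; field; lra).
  assert (Ht0 : 0 < t) by (unfold t; apply Rdiv_lt_0_compat; lra).
  assert (Ht1 : t < 1) by nra.
  exists (eps/2), (t * (eps/2)).
  assert (Hab1 : - Rabs x2 <= x2) by (pose proof (Rle_abs (-x2)); rewrite Rabs_Ropp in H; lra).
  assert (Hab2 : x2 <= Rabs x2) by apply Rle_abs.
  assert (0 < t * (eps/2) < eps) by (split; nra).
  split; [lra|]. split; [lra|]. split.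
  - unfold A_apply1.
    assert (Hq : (1 - pi) * x2 * t >= - (Rabs x2 * t)).
    { assert (0 <= (1-pi)*(Rabs x2 + x2) * t) by
        (apply Rmult_le_pos; [apply Rmult_le_pos|]; lra).
      assert (0 <= pi * Rabs x2 * t) by (apply Rmult_le_pos; [apply Rmult_le_pos|]; try lra; apply Rabs_pos). nra. }
    assert (Rabs x2 * t = M*t - t) by (unfold M; ring).
    assert (Rabs x2 * t < c) by lra.
    assert ((1 - pi) * x2 * (t * (eps / 2)) > - c * (eps/2)).
    { replace ((1 - pi) * x2 * (t * (eps / 2))) with (((1 - pi) * x2 * t) * (eps/2)) by ring.
      apply Rmult_gt_compat_r; lra. }
    unfold c in *. nra.
  - unfold A_apply2.
    assert (Hq : (1 - pi * x2) * t <= M * t).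
    { assert (M * t - (1 - pi * x2) * t = (Rabs x2 + pi * x2) * t) by (unfold M; ring).
      assert (0 <= (Rabs x2 + pi * x2) * t); [|lra].
      apply Rmult_le_pos; [|lra].
      destruct (Rle_dec 0 x2); [nra|nra]. }
    assert ((1 - pi * x2) * t < a) by lra.
    assert ((1 - pi * x2) * t * (eps/2) < a * (eps/2)) by (apply Rmult_lt_compat_r; lra).
    unfold a in *. nra.
Qed.

Theorem corollary2 (T1 T2 : type_data) :
  valid_type T1 -> valid_type T2 ->
  ( (x_val T1 > 1 /\ x_val T2 > 1) ->
      forall pi, 0 < pi < 1 -> diffusion_small_seed pi (x_val T1) (x_val T2) ) /\
  ( (x_val T1 <= 1 /\ x_val T2 <= 1) ->
      forall pi, 0 < pi < 1 -> ~ diffusion_small_seed pi (x_val T1) (x_val T2) ) /\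
  ( ((x_val T1 > 1 /\ x_val T2 <= 1) \/ (x_val T1 <= 1 /\ x_val T2 > 1)) ->
      exists pistar, 0 < pistar < 1 /\
        forall pi, pistar < pi < 1 -> diffusion_small_seed pi (x_val T1) (x_val T2) ).
Proof.
  intros _ _.
  generalize (x_val T1) (x_val T2). intros x1 x2.
  split; [|split].
  - intros [H1 H2] pi Hpi eps He. exists (eps/2), (eps/2).
    assert (0 < pi * (x1 - 1) * (eps/2)) by (repeat apply Rmult_lt_0_compat; lra).
    assert (0 < (1-pi) * (x1 - 1) * (eps/2)) by (repeat apply Rmult_lt_0_compat; lra).
    assert (0 < pi * (x2 - 1) * (eps/2)) by (repeat apply Rmult_lt_0_compat; lra).
    assert (0 < (1-pi) * (x2 - 1) * (eps/2)) by (repeat apply Rmult_lt_0_compat; lra).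
    unfold A_apply1, A_apply2. repeat split; try lra.
  - intros [H1 H2] pi Hpi D.
    destruct (D 1 ltac:(lra)) as [v1 [v2 [A [B [C E]]]]].
    unfold A_apply1, A_apply2 in *.
    assert (0 <= (1 - x1) * v1) by (apply Rmult_le_pos; lra).
    assert (0 <= (1 - x2) * v2) by (apply Rmult_le_pos; lra).
    lra.
  - intros [[H1 H2]|[H1 H2]].
    + assert (Hx : 0 < /x1) by (apply Rinv_0_lt_compat; lra).
      assert (Hx1 : /x1 < 1) by (rewrite <- Rinv_1; apply Rinv_lt_contravar; lra).
      exists ((1 + /x1)/2). split; [lra|].
      intros pi Hpi eps He. apply key; auto.
    + assert (Hx : 0 < /x2) by (apply Rinv_0_lt_compat; lra).
      assert (Hx1 : /x2 < 1) by (rewrite <- Rinv_1; apply Rinv_lt_contravar; lra).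
      exists ((1 + /x2)/2). split; [lra|].
      intros pi Hpi eps He.
      destruct (key x2 x1 pi eps H2 Hpi He) as [v2 [v1 [A [B [C D]]]]].
      exists v1, v2. unfold A_apply1, A_apply2 in *. repeat split; try lra.
Qed.
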